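(* Let $G$ be a connected graph that has a cut vertex. Then a minimum connecting transition set of $G$ has size exactly $|V(G)|-2$; equivalently, $\{V(G)\}$ is a connecting hypergraph of $G$ of minimum cost.
   Context: All graphs are finite, simple and undirected. A cut vertex of a connected graph $G$ is a vertex $p$ such that $G-p$ is disconnected. $G[X]$ denotes the subgraph induced by $X\subseteq V(G)$. A transition of a graph $G$ is an unordered pair $\{ab,bc\}$ of two distinct edges of $G$ sharing the vertex $b$ (so $a\neq c$); it is written $abc$. A walk in $G$ is a sequence $(v_1,\dots,v_k)$ of vertices with $v_iv_{i+1}\in E(G)$ for all $i\le k-1$; it leads from $v_1$ to $v_k$. For a set $T$ of transitions of $G$, a walk $(v_1,\dots,v_k)$ is $T$-compatible if for every $i\in[1,k-2]$, either $v_i=v_{i+2}$ or $v_iv_{i+1}v_{i+2}\in T$. The graph $G$ is $T$-connected, and $T$ is a connecting transition set of $G$, if for all vertices $u,v$ of $G$ there is a $T$-compatible walk leading from $u$ to $v$. A connecting hypergraph of $G$ is a set $H$ of subsets of $V(G)$ such that every $E\in H$ satisfies $|E|\ge 2$ and $G[E]$ is connected, and for every pair of distinct non-adjacent vertices $u,v$ of $G$ there exists $E\in H$ with $u,v\in E$. Its cost is $\mathrm{cost}(H)=\sum_{E\in H}(|E|-2)$. *)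

(* Defs.v *)
(* A finite simple graph is a symmetric irreflexive
   relation e : rel V on a finType V (vertex set = all of V). *)
From mathcomp Require Import all_boot.
Set Implicit Arguments. Unset Strict Implicit. Unset Printing Implicit Defensive.

Section Graphs.
Variable V : finType.
Variable e : rel V.

Definition connected_graph : Prop := forall x y : V, connect e x y.

Definition del_rel (p : V) : rel V :=
  fun x y => [&& e x y, x != p & y != p].

Definition cut_vertex (p : V) : Prop :=
  exists u v : V, [/\ u != p, v != p & ~~ connect (del_rel p) u v].

(* A transition {ab, bc} (a <> c) is encoded canonically as the pair
   (b, {a, c}) of its middle vertex and its two-element set of ends. *)
Definition transition := (V * {set V})%type.

Definition trans_of (a b c : V) : transition := (b, [set a; c]).

Definition is_transition (t : transition) : Prop :=
  #|t.2| = 2 /\ forall x, x \in t.2 -> e t.1 x.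

Definition transition_set (Tr : {set transition}) : Prop :=
  forall t, t \in Tr -> is_transition t.

Definition compatible (Tr : {set transition}) (x : V) (s : seq V) : Prop :=
  let w := x :: s in
  forall i, i.+2 < size w ->
    nth x w i = nth x w i.+2 \/
    trans_of (nth x w i) (nth x w i.+1) (nth x w i.+2) \in Tr.

Definition T_connected (Tr : {set transition}) : Prop :=
  forall u v : V, exists s : seq V,
    [/\ path e u s, last u s = v & compatible Tr u s].

Definition connecting_transition_set (Tr : {set transition}) : Prop :=
  transition_set Tr /\ T_connected Tr.

Definition induced_rel (E : {set V}) : rel V :=
  fun x y => [&& e x y, x \in E & y \in E].

Definition induced_connected (E : {set V}) : Prop :=
  forall x y, x \in E -> y \in E -> connect (induced_rel E) x y.

Definition connecting_hypergraph (H : {set {set V}}) : Prop :=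
  (forall E, E \in H -> 2 <= #|E| /\ induced_connected E) /\
  (forall u v : V, u != v -> ~~ e u v ->
     exists2 E, E \in H & (u \in E) && (v \in E)).

Definition hcost (H : {set {set V}}) : nat := \sum_(E in H) (#|E| - 2).

End Graphs.

(* Main.v *)
Require Import Defs.
From mathcomp Require Import all_boot zify.
Set Implicit Arguments. Unset Strict Implicit. Unset Printing Implicit Defensive.

Definition lrel (X : eqType) (L : seq (X * X)) : rel X :=
  fun x y => ((x, y) \in L) || ((y, x) \in L).

Lemma lrel_sym (X : eqType) (L : seq (X * X)) : symmetric (lrel L).
Proof. by move=> x y; rewrite /lrel orbC. Qed.

Lemma conn_f (X : finType) (r : rel X) (Y : Type) (f : X -> Y) :
  (forall x y, r x y -> f x = f y) -> forall x y, connect r x y -> f x = f y.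
Proof.
move=> H x y /connectP [s ps ->]; elim: s x ps => //= z s IH x /andP [rxz ps].
by rewrite (H _ _ rxz) (IH _ ps).
Qed.

Lemma forest_f (X : finType) (L : seq (X * X)) :
  exists f : X -> X,
    [/\ (forall x y, f x = f y -> connect (lrel L) x y),
        (forall x y, lrel L x y -> f x = f y) &
        #|X| <= #|[set f x | x in X]| + size L].
Proof.
elim: L => [|[a b] L [f [H1 H2 H3]]].
  exists id; split => //.
  - by move=> x y ->; apply: connect0.
  - by rewrite card_imset //= addn0.
have sub : forall x y, connect (lrel L) x y -> connect (lrel ((a, b) :: L)) x y.
  apply: connect_sub => x y H; apply: connect1.
  by move: H; rewrite /lrel !inE => /orP [] ->; rewrite ?orbT.
have Hab : connect (lrel ((a, b) :: L)) a b.
  by apply: connect1; rewrite /lrel !inE eqxx.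
have csym := sym_connect_sym (lrel_sym ((a, b) :: L)).
have [fab|fab] := eqVneq (f a) (f b).
  exists f; split.
  - by move=> x y /H1 /sub.
  - move=> x y; rewrite /lrel !inE => /orP [/orP [/eqP [-> ->] | HL]|/orP [/eqP [-> ->]|HL]] //.
    + by apply: H2; rewrite /lrel HL.
    + by apply: H2; rewrite /lrel HL orbT.
  - by rewrite /= addnS ltnW // ltnS.
pose g x := if f x == f b then f a else f x.
exists g; split.
- move=> x y; rewrite /g.
  case: eqP => [fx|fx]; case: eqP => [fy|fy] => E.
  + by apply: sub; apply: H1; rewrite fx fy.
  + apply: (connect_trans (sub _ _ (H1 x b fx))).
    apply: (connect_trans _ (sub _ _ (H1 a y E))).
    by rewrite csym.
  + apply: (connect_trans (sub _ _ (H1 x a E))).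
    by apply: (connect_trans Hab); rewrite csym; apply: sub; apply: H1.
  + by apply: sub; apply: H1.
- move=> x y; rewrite /lrel !inE => /orP [/orP [/eqP [-> ->] | HL]|/orP [/eqP [-> ->]|HL]].
  + by rewrite /g eqxx (negbTE fab).
  + by rewrite /g (H2 x y) // /lrel HL.
  + by rewrite /g eqxx (negbTE fab).
  + by rewrite /g (H2 x y) // /lrel HL orbT.
- have -> : [set g x | x in X] = [set f x | x in X] :\ f b.
    apply/setP => z; rewrite !inE; apply/imsetP/andP.
    + move=> [x _ ->]; rewrite /g; case: ifP => [_|fx].
        by split; [exact: fab | apply/imsetP; exists a].
      by split; [rewrite fx | apply/imsetP; exists x].
    + move=> [zb /imsetP [x _ zx]]; exists x => //; rewrite /g zx.
      by rewrite -zx (negbTE zb).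
  move: H3; rewrite [#|[set f x | x in X]|](cardsD1 (f b)).
  have -> : f b \in [set f x | x in X] by apply/imsetP; exists b.
  by rewrite /= add1n addSn addnS.
Qed.

Lemma forest_set (X : finType) (S : {set X}) (L : seq (X * X)) :
  (forall x y, x \in S -> y \in S -> connect (lrel L) x y) ->
  #|S| <= (size L).+1.
Proof.
move=> HS; have [f [_ H2 H3]] := forest_f L.
have fc := conn_f H2.
case: (set_0Vmem S) => [->|[x0 x0S]]; first by rewrite cards0.
have sub : [set f x | x in X] \subset f x0 |: [set f x | x in ~: S].
  apply/subsetP => z /imsetP [x _ ->]; rewrite !inE.
  case: (boolP (x \in S)) => xS.
    by rewrite (fc x x0) ?eqxx // HS.
  by apply/orP; right; apply/imsetP; exists x; rewrite ?inE.
have c1 := subset_leq_card sub.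
have c2 : #|f x0 |: [set f x | x in ~: S]| <= 1 + #|~: S|.
  by rewrite cardsU1 leq_add ?leq_b1 ?leq_imset_card.
have := cardsC S => E. rewrite -E in H3. lia.
Qed.


Lemma arith_core a b x y c : 0 < x <= a -> 0 < y <= b -> x + y <= c.+1 ->
  (a + b - 1) * (x * y) <= a * b * c.
Proof.
move=> /andP [x0 xa] /andP [y0 yb] hc.
have h1 : a * (x - 1) <= x * (a - 1) by nia.
have h2 : b * (y - 1) <= y * (b - 1) by nia.
have h3 := leq_mul h1 h2.
have h4 : a * b * (x + y - 1) <= a * b * c by apply: leq_mul => //; lia.
apply: leq_trans h4.
case: a b x y x0 y0 xa yb h1 h2 h3 {hc} => [|a] [|b] [|x] [|y] //= _ _ xa yb _ _ h3.
rewrite !subn1 /= in h3 *.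
nia.
Qed.

Lemma sum_bound (I : finType) (J : {set I}) (c x y : I -> nat) a b :
  0 < a -> 0 < b ->
  (forall i, i \in J -> x i <= a /\ y i <= b) ->
  (forall i, i \in J -> 0 < x i -> 0 < y i -> x i + y i <= (c i).+1) ->
  a * b <= \sum_(i in J) x i * y i ->
  a + b - 1 <= \sum_(i in J) c i.
Proof.
move=> a0 b0 Hxy Hc Hs.
have ab0 : 0 < a * b by rewrite muln_gt0 a0 b0.
rewrite -(leq_pmul2r ab0).
apply: (leq_trans (leq_mul (leqnn (a + b - 1)) Hs)).
rewrite big_distrr big_distrl /=.
apply: leq_sum => i iJ.
have [xa yb] := Hxy i iJ.
case: (posnP (x i)) => [->|xp]; first by rewrite mul0n muln0.
case: (posnP (y i)) => [->|yp]; first by rewrite muln0 muln0.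
rewrite [c i * _]mulnC; apply: arith_core; rewrite ?xp ?yp //.
exact: Hc.
Qed.

Lemma cover_card (T I : finType) (S : {set T}) (J : {set I}) (F : I -> {set T}) :
  (forall z, z \in S -> exists2 i, i \in J & z \in F i) ->
  #|S| <= \sum_(i in J) #|F i|.
Proof.
move=> H.
have sub : S \subset \bigcup_(i in J) F i.
  by apply/subsetP => z /H [i iJ zi]; apply/bigcupP; exists i.
apply: (leq_trans (subset_leq_card sub)).
elim/big_rec2: _ => [|i n U _ hU]; first by rewrite cards0.
rewrite cardsU; lia.
Qed.


Lemma conn_pres (X : finType) (r : rel X) (P : pred X) :
  (forall x y, r x y -> P y) -> forall x y, connect r x y -> P x -> P y.
Proof.
move=> H x y /connectP [s ps ->]; elim: s x ps => //= z s IH x /andP [rxz ps] _.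
by apply: (IH _ ps); apply: (H x).
Qed.

Lemma del_step (V : finType) (e : rel V) p x y : del_rel e p x y -> y != p.
Proof. by case/and3P. Qed.

Lemma del_conn (V : finType) (e : rel V) p x y :
  connect (del_rel e p) x y -> x != p -> y != p.
Proof. exact: (conn_pres (@del_step V e p)). Qed.

Definition sideA (V : finType) (e : rel V) p u := [set x | connect (del_rel e p) u x].
Definition sideB (V : finType) (e : rel V) p u :=
  [set x | (x != p) && ~~ connect (del_rel e p) u x].

Lemma sides_facts (V : finType) (e : rel V) p u v :
  u != p -> v != p -> ~~ connect (del_rel e p) u v ->
  [/\ u \in sideA e p u, v \in sideB e p u, p \notin sideA e p u,
      p \notin sideB e p u &
      #|sideA e p u| + #|sideB e p u| = #|V| - 1].
Proof.
move=> up vp nuv.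
have pA : p \notin sideA e p u.
  rewrite inE; apply/negP => /del_conn H.
  by have := H up; rewrite eqxx.
split => //.
- by rewrite inE connect0.
- by rewrite inE vp.
- by rewrite inE eqxx.
have -> : sideB e p u = ~: sideA e p u :\ p.
  by apply/setP => x; rewrite !inE andbC.
have := cardsC (sideA e p u); rewrite (cardsD1 p (~: _)) inE pA.
by move=> <-; lia.
Qed.

Lemma sides_cross (V : finType) (e : rel V) p u a b : u != p ->
  a \in sideA e p u -> b \in sideB e p u ->
  [/\ a != b, ~~ e a b & forall E : {set V}, a \in E -> b \in E ->
       induced_connected e E -> p \in E].
Proof.
move=> up; rewrite !inE => ua /andP [bp nub].
have nab : ~~ connect (del_rel e p) a b.
  by apply/negP => ab; move/negP: nub; apply; apply: connect_trans ua ab.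
have ap : a != p.
  by apply: (del_conn ua).
split.
- by apply/negP => /eqP ab; subst b; rewrite connect0 in nab.
- apply/negP => eab; move/negP: nab; apply; apply: connect1.
  by rewrite /del_rel eab ap bp.
- move=> E aE bE Ec; apply/negPn/negP => pE.
  move/negP: nab; apply.
  apply: (connect_sub _ (Ec a b aE bE)) => x y /and3P [exy xE yE].
  apply: connect1; rewrite /del_rel exy.
  by apply/and3P; split => //; apply/eqP => xp; [rewrite -xp xE in pE | rewrite -xp yE in pE].
Qed.


Lemma hyp_bound (V : finType) (e : rel V) p u v :
  u != p -> v != p -> ~~ connect (del_rel e p) u v ->
  forall H : {set {set V}}, connecting_hypergraph e H -> #|V| - 2 <= hcost H.
Proof.
move=> up vp nuv H [H1 H2].
have [uA vB pA pB cAB] := sides_facts up vp nuv.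
set A := sideA e p u in uA pA cAB *; set B := sideB e p u in vB pB cAB *.
have a0 : 0 < #|A| by apply/card_gt0P; exists u.
have b0 : 0 < #|B| by apply/card_gt0P; exists v.
have -> : #|V| - 2 = #|A| + #|B| - 1 by lia.
rewrite /hcost.
apply: (@sum_bound _ H (fun E => #|E| - 2) (fun E => #|E :&: A|) (fun E => #|E :&: B|)) => //.
- by move=> E _; split; apply: subset_leq_card; apply: subsetIr.
- move=> E EH /card_gt0P [a] /setIP [aE aA] /card_gt0P [b] /setIP [bE bB].
  have [_ _ Hp] := sides_cross up aA bB.
  have pE : p \in E := Hp E aE bE (H1 E EH).2.
  have sub : (E :&: A) :|: (E :&: B) \subset E :\ p.
    apply/subsetP => x; rewrite in_setD1 in_setU !in_setI => /orP [] /andP [-> xS];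
      rewrite andbT; apply/eqP => xp; [by rewrite -xp xS in pA | by rewrite -xp xS in pB].
  have := subset_leq_card sub; rewrite cardsU (cardsD1 p E) pE.
  have -> : E :&: A :&: (E :&: B) = set0.
    apply/setP => x; rewrite !in_setI in_set0; apply/negP => /andP [/andP [_ xA] /andP [_ xB]].
    by move: xB; rewrite inE => /andP [_]; move: xA; rewrite inE => ->.
  rewrite cards0 /=; move: (_ + _) (#|E :\ p|) => s z; clear; lia.
- rewrite -cardsX.
  apply: (leq_trans (cover_card (J := H) (F := fun E => setX (E :&: A) (E :&: B)) _)).
    move=> [a b] /setXP [aA bB].
    have [nab neab _] := sides_cross up aA bB.
    have [E EH /andP [aE bE]] := H2 a b nab neab.
    by exists E => //; apply/setXP; rewrite !in_setI aE bE aA bB.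
  by apply: leq_sum => E _; rewrite cardsX.
Qed.

Lemma top_hyp (V : finType) (e : rel V) (p u : V) :
  connected_graph e -> u != p ->
  connecting_hypergraph e [set [set: V]] /\ hcost [set [set: V]] = #|V| - 2.
Proof.
move=> Gc up; split; last by rewrite /hcost big_set1 cardsT.
split.
- move=> E; rewrite inE => /eqP ->; split.
    by rewrite cardsT (cardD1 u) (cardD1 p) !inE eq_sym up.
  move=> x y _ _; apply: (connect_sub _ (Gc x y)) => a b eab.
  by apply: connect1; rewrite /induced_rel eab !inE.
- by move=> x y _ _; exists [set: V]; rewrite ?inE.
Qed.


Definition pk1 (V : finType) (S : {set V}) (d : V) := odflt d [pick x in S].
Definition pk2 (V : finType) (S : {set V}) (d : V) := odflt d [pick x in S :\ pk1 S d].

Lemma pk_spec (V : finType) (S : {set V}) d : #|S| = 2 ->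
  [/\ pk1 S d \in S, pk2 S d \in S, pk1 S d != pk2 S d &
      forall w, w \in S -> w = pk1 S d \/ w = pk2 S d].
Proof.
move=> S2.
have h1 : pk1 S d \in S.
  rewrite /pk1; case: pickP => [x //|h].
  by move: S2; rewrite (eq_card0 h).
have S1 : #|S :\ pk1 S d| = 1 by move: S2; rewrite (cardsD1 (pk1 S d)) h1 => [[]].
have h2 : pk2 S d \in S :\ pk1 S d.
  rewrite /pk2; case: pickP => [x //|h].
  by move: S1; rewrite (eq_card0 h).
move: (h2); rewrite in_setD1 => /andP [n12 h2'].
split => //; first by rewrite eq_sym.
move=> w wS; case: (eqVneq w (pk1 S d)) => [->|wn]; first by left.
right; move/eqP: S1 => /cards1P [z Hz].
have : w \in S :\ pk1 S d by rewrite in_setD1 wn wS.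
by rewrite Hz in h2 *; rewrite !inE in h2 * => /eqP -> ; move/eqP: h2.
Qed.

Lemma compat_cons (V : finType) (Tr : {set transition V}) x y z s :
  compatible Tr x (y :: z :: s) ->
  (x = z \/ trans_of x y z \in Tr) /\ compatible Tr y (z :: s).
Proof.
move=> H; split; first exact: (H 0).
move=> i hi.
have := H i.+1 hi.
by rewrite (set_nth_default x y (ltnW (ltnW hi))) (set_nth_default x y (ltnW hi)) (set_nth_default x y hi).
Qed.

Definition lk (V : finType) (t : transition V) : {set V} * {set V} :=
  ([set pk1 t.2 t.1; t.1], [set t.1; pk2 t.2 t.1]).
Definition Lk (V : finType) (Tr : {set transition V}) := [seq lk t | t <- enum Tr].
Definition Gam (V : finType) (Tr : {set transition V}) := lrel (Lk Tr).

Lemma trans_link (V : finType) (Tr : {set transition V}) x y z :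
  x != z -> trans_of x y z \in Tr -> Gam Tr [set x; y] [set y; z].
Proof.
move=> xz tT.
have inL : lk (trans_of x y z) \in Lk Tr by apply: map_f; rewrite mem_enum.
have c2 : #|[set x; z]| = 2 by rewrite cards2 xz.
have [h1 h2 h12 _] := pk_spec y c2.
move: inL h1 h2 h12; rewrite /lk /trans_of /= !inE.
set a := pk1 _ _; set c := pk2 _ _.
move=> inL /orP [] /eqP ha /orP [] /eqP hc; rewrite ha hc ?eqxx // => _.
- by rewrite /Gam /lrel; move: inL; rewrite ha hc => ->.
- rewrite /Gam /lrel; move: inL; rewrite ha hc => inL.
  have -> : [set y; z] = [set z; y] by apply/setP => w; rewrite !inE orbC.
  have -> : [set x; y] = [set y; x] by apply/setP => w; rewrite !inE orbC.
  by rewrite inL orbT.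
Qed.

Lemma walk_class (V : finType) (e : rel V) (Tr : {set transition V}) s x y :
  path e x (y :: s) -> compatible Tr x (y :: s) ->
  exists2 E, connect (Gam Tr) [set x; y] E & last y s \in E.
Proof.
elim: s x y => [|z s IH] x y.
  by move=> _ _; exists [set x; y]; rewrite ?connect0 // !inE eqxx orbT.
move=> /= /andP [exy pyz] /compat_cons [hxz cy].
have [E cE lE] := IH y z pyz cy.
exists E => //; apply: connect_trans cE.
case: (eqVneq x z) => [<-|nxz]; first by rewrite setUC connect0.
apply: connect1; apply: trans_link => //.
by case: hxz => // /eqP; rewrite (negbTE nxz).
Qed.

Definition isedge (V : finType) (e : rel V) (E : {set V}) :=
  [exists a, exists b, e a b && (E == [set a; b])].

Lemma Gam_mem (V : finType) (Tr : {set transition V}) E E' :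
  Gam Tr E E' -> exists2 t, t \in Tr & (E, E') = lk t \/ (E', E) = lk t.
Proof.
rewrite /Gam /lrel => /orP [] /mapP [t tT h]; exists t.
- by rewrite -mem_enum.
- by left.
- by rewrite -mem_enum.
- by right.
Qed.

Lemma lk_edge (V : finType) (e : rel V) (Tr : {set transition V}) t :
  symmetric e -> transition_set e Tr -> t \in Tr ->
  isedge e (lk t).1 /\ isedge e (lk t).2.
Proof.
move=> es TS tT; have [c2 ht] := TS t tT.
have [h1 h2 _ _] := pk_spec t.1 c2.
split; apply/existsP.
  exists (pk1 t.2 t.1); apply/existsP; exists t.1; rewrite /= eqxx andbT es.
  exact: ht.
exists t.1; apply/existsP; exists (pk2 t.2 t.1); rewrite /= eqxx andbT.
exact: ht.
Qed.

Lemma Gam_edge (V : finType) (e : rel V) (Tr : {set transition V}) E E' :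
  symmetric e -> transition_set e Tr -> Gam Tr E E' -> isedge e E'.
Proof.
move=> es TS /Gam_mem [t tT [] h]; have [h1 h2] := lk_edge es TS tT;
  move: h1 h2; rewrite -h //.
Qed.

Lemma Gam_share (V : finType) (Tr : {set transition V}) E E' :
  Gam Tr E E' -> exists b, b \in E /\ b \in E'.
Proof.
move=> /Gam_mem [t tT [] h]; exists t.1; move: h; rewrite /lk => -[-> ->];
  by rewrite !inE eqxx ?orbT.
Qed.

Definition cls (V : finType) (Tr : {set transition V}) (E : {set V}) :=
  [set E' | connect (Gam Tr) E E'].

Lemma cls_eq (V : finType) (Tr : {set transition V}) E x :
  x \in cls Tr E -> cls Tr x = cls Tr E.
Proof.
have csym := sym_connect_sym (lrel_sym (Lk Tr)).
rewrite inE => Ex; apply/setP => y; rewrite !inE; apply/idP/idP.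
  by apply: connect_trans.
by move=> Ey; apply: connect_trans Ey; rewrite csym.
Qed.

Definition vset (V : finType) (K : {set {set V}}) := [set w | [exists E in K, w \in E]].


Lemma conn_restrict (X : finType) (r r' : rel X) (P : pred X) :
  (forall x y, P x -> r x y -> P y && r' x y) ->
  forall x y, P x -> connect r x y -> connect r' x y.
Proof.
move=> H x y Px /connectP [s ps ->]; elim: s x Px ps => [|z s IH] x Px /=.
  by rewrite connect0.
move=> /andP [rxz ps]; have /andP [Pz r'xz] := H _ _ Px rxz.
by apply: connect_trans (connect1 r'xz) (IH _ Pz ps).
Qed.

Lemma conn_pres2 (X : finType) (r : rel X) (P : pred X) :
  (forall x y, P x -> r x y -> P y) -> forall x y, connect r x y -> P x -> P y.
Proof.
move=> H x y /connectP [s ps ->]; elim: s x ps => //= z s IH x /andP [rxz ps] Px.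
by apply: (IH _ ps); apply: (H x).
Qed.

Lemma cls_edge (V : finType) (e : rel V) (Tr : {set transition V}) E0 E :
  symmetric e -> transition_set e Tr -> isedge e E0 -> E \in cls Tr E0 -> isedge e E.
Proof.
move=> es TS E0e; rewrite inE => cE.
exact: (conn_pres (P := isedge e) (fun x y h => Gam_edge es TS h) cE E0e).
Qed.

Lemma edge_card (V : finType) (e : rel V) E :
  irreflexive e -> isedge e E -> #|E| = 2.
Proof.
move=> ei /existsP [a] /existsP [b] /andP [eab /eqP ->].
rewrite cards2; case: eqVneq => // ab; by rewrite ab ei in eab.
Qed.

Lemma cls_mem_conn (V : finType) (Tr : {set transition V}) E0 E E' :
  E \in cls Tr E0 -> Gam Tr E E' -> E' \in cls Tr E0.
Proof. by rewrite !inE => h g; apply: connect_trans h (connect1 g). Qed.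

Lemma cls_conn (V : finType) (Tr : {set transition V}) E0 E1 E2 :
  E1 \in cls Tr E0 -> E2 \in cls Tr E0 -> connect (Gam Tr) E1 E2.
Proof.
have csym := sym_connect_sym (lrel_sym (Lk Tr)).
rewrite !inE => h1 h2; apply: connect_trans h2; by rewrite csym.
Qed.

Lemma vset_conn (V : finType) (Tr : {set transition V}) E0 (R : rel V) :
  (forall E w w', E \in cls Tr E0 -> w \in E -> w' \in E -> connect R w w') ->
  forall x y, x \in vset (cls Tr E0) -> y \in vset (cls Tr E0) -> connect R x y.
Proof.
move=> HR x y; rewrite !inE => /existsP [E1 /andP [E1K xE1]] /existsP [E2 /andP [E2K yE2]].
pose P := fun E => (E \in cls Tr E0) && [forall w, (w \in E) ==> connect R x w].
have : P E2.
  apply: (conn_pres2 (P := P) _ (cls_conn E1K E2K)).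
    move=> E E' /andP [EK /forallP Hw] g; apply/andP; split.
      exact: cls_mem_conn EK g.
    have [b [bE bE']] := Gam_share g.
    apply/forallP => w; apply/implyP => wE'.
    apply: connect_trans (implyP (Hw b) bE) _.
    exact: HR (cls_mem_conn EK g) bE' wE'.
  by rewrite /P E1K /=; apply/forallP => w; apply/implyP; apply: HR.
by move=> /andP [_ /forallP /(_ y) /implyP]; apply.
Qed.

Definition tcnt (V : finType) (Tr : {set transition V}) (K : {set {set V}}) :=
  #|[set t in Tr | (lk t).1 \in K]|.

Lemma K_forest1 (V : finType) (Tr : {set transition V}) E0 :
  #|cls Tr E0| <= (tcnt Tr (cls Tr E0)).+1.
Proof.
set K := cls Tr E0; set T' := [set t in Tr | (lk t).1 \in K].
have -> : tcnt Tr K = size (Lk T') by rewrite /Lk size_map -cardE.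
apply: forest_set => x y xK yK.
apply: (conn_restrict (P := fun E => E \in K) _ xK (cls_conn xK yK)).
move=> E E' EK g; have E'K := cls_mem_conn EK g.
rewrite E'K /=; have [t tT [] h] := Gam_mem g.
- have inL : lk t \in Lk T' by apply: map_f; rewrite mem_enum inE tT -h.
  by rewrite /lrel h inL.
- have inL : lk t \in Lk T' by apply: map_f; rewrite mem_enum inE tT -h.
  by rewrite /lrel h inL orbT.
Qed.

Lemma K_forest2 (V : finType) (e : rel V) (Tr : {set transition V}) E0 (d : V) :
  symmetric e -> irreflexive e -> transition_set e Tr -> isedge e E0 ->
  #|vset (cls Tr E0)| <= #|cls Tr E0|.+1.
Proof.
move=> es ei TS E0e.
set K := cls Tr E0; set L := [seq (pk1 E d, pk2 E d) | E <- enum K].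
have -> : #|K| = size L by rewrite size_map -cardE.
apply: forest_set; apply: vset_conn => E w w' EK wE w'E.
have [h1 h2 h12 hw] := pk_spec d (edge_card ei (cls_edge es TS E0e EK)).
have inL : (pk1 E d, pk2 E d) \in L by apply: map_f; rewrite mem_enum.
case: (hw w wE) => ->; case: (hw w' w'E) => ->; rewrite ?connect0 //;
  by apply: connect1; rewrite /lrel inL ?orbT.
Qed.

Lemma vset_induced (V : finType) (e : rel V) (Tr : {set transition V}) E0 :
  symmetric e -> irreflexive e -> transition_set e Tr -> isedge e E0 ->
  induced_connected e (vset (cls Tr E0)).
Proof.
move=> es ei TS E0e; move=> x y; apply: vset_conn => E w w' EK wE w'E.
have := cls_edge es TS E0e EK => /existsP [a] /existsP [b] /andP [eab /eqP EE].
have wv : w \in vset (cls Tr E0) by rewrite inE; apply/existsP; exists E; rewrite EK.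
have w'v : w' \in vset (cls Tr E0) by rewrite inE; apply/existsP; exists E; rewrite EK.
have eba : e b a by rewrite es.
have hw : w = a \/ w = b by move: wE; rewrite EE !inE => /orP [] /eqP; [left|right].
have hw' : w' = a \/ w' = b by move: w'E; rewrite EE !inE => /orP [] /eqP; [left|right].
case: hw => ?; case: hw' => ?; subst; rewrite ?connect0 //; apply: connect1;
  by rewrite /induced_rel ?eab ?eba wv w'v.
Qed.


Lemma sum_imset_le (I J : finType) (h : I -> J) (A : {set I}) (F : J -> nat) :
  \sum_(j in h @: A) F j <= \sum_(i in A) F (h i).
Proof.
rewrite (partition_big_imset h) /=.
apply: leq_sum => j /imsetP [i iA ->].
by rewrite (bigD1 i) /= ?iA ?eqxx // leq_addr.
Qed.

Lemma trans_lower (V : finType) (e : rel V) p u v :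
  symmetric e -> irreflexive e ->
  u != p -> v != p -> ~~ connect (del_rel e p) u v ->
  forall Tr, connecting_transition_set e Tr -> #|V| - 2 <= #|Tr|.
Proof.
move=> es ei up vp nuv Tr [TS TC].
set Cls := [set cls Tr E | E in [set E | isedge e E]].
set H := [set vset K | K in Cls].
have Hc : connecting_hypergraph e H.
  split.
  - move=> E' /imsetP [K /imsetP [E0 + ->] ->]; rewrite inE => E0e; split.
      rewrite -(edge_card ei E0e); apply: subset_leq_card; apply/subsetP => w wE.
      by rewrite inE; apply/existsP; exists E0; rewrite wE andbT inE connect0.
    exact: vset_induced.
  - move=> x y nxy _; have [s [ps ls cs]] := TC x y.
    case: s ps ls cs => [|z s] ps ls cs; first by rewrite /= in ls; rewrite ls eqxx in nxy.
    have [E cE lE] := walk_class ps cs.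
    have xze : isedge e [set x; z].
      by move: (ps) => /andP [exz _]; apply/existsP; exists x; apply/existsP; exists z; rewrite exz eqxx.
    exists (vset (cls Tr [set x; z])).
      by apply/imsetP; exists (cls Tr [set x; z]) => //; apply/imsetP; exists [set x; z]; rewrite ?inE.
    rewrite !inE; apply/andP; split; apply/existsP.
      by exists [set x; z]; rewrite !inE connect0 eqxx.
    by exists E; rewrite inE cE -ls.
apply: (leq_trans (hyp_bound up vp nuv Hc)).
rewrite /hcost.
apply: (leq_trans (@sum_imset_le _ _ (@vset V) Cls (fun E => #|E| - 2))).
apply: (@leq_trans (\sum_(K in Cls) tcnt Tr K)).
  apply: leq_sum => K /imsetP [E0 + ->]; rewrite inE => E0e.
  have h1 := K_forest1 Tr E0; have h2 := K_forest2 u es ei TS E0e.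
  move: h1 h2; move: (tcnt _ _) (#|cls Tr E0|) (#|vset _|) => a b c; clear; lia.
pose kap t := cls Tr (lk t).1.
apply: (@leq_trans (\sum_K #|[set t in Tr | kap t == K]|)).
  rewrite big_mkcond /=; apply: leq_sum => K _; case: ifP => // /imsetP [E0 _ ->].
  apply: eq_leq; rewrite /tcnt; apply: eq_card => t; rewrite !inE; congr (_ && _).
  apply/idP/eqP.
    by move=> h; apply: cls_eq; rewrite inE.
  by move=> h; move: (connect0 (Gam Tr) (lk t).1); rewrite -inE -/(cls Tr _ ) -/(kap t) h inE.
rewrite -sum1_card (partition_big kap predT) //=.
by apply: leq_sum => K _; rewrite sum1dep_card; apply: eq_leq; apply: eq_card => t; rewrite !inE.
Qed.


Fixpoint reach (V : finType) (e : rel V) (r : V) (k : nat) : {set V} :=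
  if k is k'.+1 then reach e r k' :|: [set z | [exists y in reach e r k', e y z]]
  else [set r].

Lemma reach_mono (V : finType) (e : rel V) r k x : x \in reach e r k -> x \in reach e r k.+1.
Proof. by move=> h; rewrite /= inE h. Qed.

Lemma reach_ex (V : finType) (e : rel V) r :
  connected_graph e -> forall x, exists k, x \in reach e r k.
Proof.
move=> Gc x; have /connectP [s ps ->] := Gc r x.
elim/last_ind: s ps => [|s z IH]; first by exists 0; rewrite inE.
rewrite rcons_path => /andP [ps ez]; have [k hk] := IH ps.
exists k.+1; rewrite last_rcons /= !inE; apply/orP; right.
by apply/existsP; exists (last r s); rewrite hk.
Qed.

Definition dist (V : finType) (e : rel V) r (Gc : connected_graph e) (x : V) :=
  ex_minn (reach_ex r Gc x).

Lemma dist_reach (V : finType) (e : rel V) r (Gc : connected_graph e) x :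
  x \in reach e r (dist r Gc x).
Proof. by rewrite /dist; case: ex_minnP. Qed.

Lemma dist_min (V : finType) (e : rel V) r (Gc : connected_graph e) x k :
  x \in reach e r k -> dist r Gc x <= k.
Proof. by rewrite /dist; case: ex_minnP => m _ H /H. Qed.

Lemma dist0 (V : finType) (e : rel V) r (Gc : connected_graph e) x :
  (dist r Gc x == 0) = (x == r).
Proof.
apply/eqP/eqP => [h|->].
  by have := dist_reach r Gc x; rewrite h inE => /eqP.
by apply/eqP; rewrite -leqn0; apply: dist_min; rewrite inE.
Qed.

Lemma dist_step (V : finType) (e : rel V) r (Gc : connected_graph e) x :
  x != r -> exists2 y, e y x & dist r Gc y < dist r Gc x.
Proof.
move=> xr; have := dist_reach r Gc x.
case hd: (dist r Gc x) => [|k]; first by move/eqP: hd; rewrite dist0 (negbTE xr).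
rewrite /= inE => /orP [hk|].
  by have := dist_min Gc hk; rewrite hd ltnn.
rewrite inE => /existsP [y /andP [yk eyx]]; exists y => //.
by rewrite ltnS; apply: dist_min.
Qed.

Definition par (V : finType) (e : rel V) r (Gc : connected_graph e) (x : V) :=
  odflt r [pick y | e y x && (dist r Gc y < dist r Gc x)].

Lemma par_spec (V : finType) (e : rel V) r (Gc : connected_graph e) x :
  x != r -> e (par r Gc x) x /\ dist r Gc (par r Gc x) < dist r Gc x.
Proof.
move=> xr; rewrite /par; case: pickP => [y /andP [] //|h].
have [y ey dy] := dist_step Gc xr.
by have := h y; rewrite ey dy.
Qed.


Lemma compat_cons2 (V : finType) (Tr : {set transition V}) x y z s :
  (x = z \/ trans_of x y z \in Tr) -> compatible Tr y (z :: s) ->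
  compatible Tr x (y :: z :: s).
Proof.
move=> h0 H; rewrite /compatible /= => -[|i] hi //.
have hi' : i.+2 < size (y :: z :: s) by [].
have := H i hi'.
by rewrite (set_nth_default x y (ltnW (ltnW hi'))) (set_nth_default x y (ltnW hi')) (set_nth_default x y hi').
Qed.

Definition dstep (V : finType) (e : rel V) (Tr : {set transition V}) : rel (V * V) :=
  fun d d' => [&& d'.1 == d.2, e d.2 d'.2 & (d.1 == d'.2) || (trans_of d.1 d.2 d'.2 \in Tr)].

Lemma dart_walk (V : finType) (e : rel V) (Tr : {set transition V}) a b c d :
  e a b -> connect (dstep e Tr) (a, b) (c, d) ->
  exists s, [/\ path e a s, last a s = d & compatible Tr a s].
Proof.
move=> eab /connectP [ds pds ld].
exists (b :: map snd ds); split.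
- rewrite /= eab /=.
  elim: ds a b eab pds {ld} => //= [[x y] ds IH] a b eab /andP [/and3P [/= /eqP -> eby _] pds].
  by rewrite eby /=; apply: (IH b y).
- by rewrite /= (last_map snd ds (a, b)) -ld.
- elim: ds a b eab pds {ld} => [|[x y] ds IH] a b eab.
    by move=> _; rewrite /compatible => i.
  move=> /= /andP [/and3P [/= /eqP xb eby h] pds].
  subst x; apply: compat_cons2.
    by case/orP: h => [/eqP ->|->]; [left|right].
  exact: (IH b y eby pds).
Qed.


Lemma construct (V : finType) (e : rel V) (es : symmetric e) (ei : irreflexive e)
  (Gc : connected_graph e) (r u : V) : u != r ->
  exists Tr, connecting_transition_set e Tr /\ #|Tr| <= #|V| - 2.
Proof.
move=> ur.
pose P := par r Gc; pose D := dist r Gc.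
have ps : forall x, x != r -> e (P x) x /\ D (P x) < D x by move=> x; apply: par_spec.
have D0 : forall x, (D x == 0) = (x == r) by move=> x; apply: dist0.
pose Ch := [set c | (c != r) && (P c == r)].
have [c1 c1Ch] : exists c1, c1 \in Ch.
  have /connectP [[|y s] /= ps' ls] := Gc r u; first by rewrite ls eqxx in ur.
  move: ps' => /andP [ery _].
  have yr : y != r by apply/eqP => yr; rewrite yr ei in ery.
  have Dy : D y <= 1 by apply: dist_min; rewrite /= !inE; apply/orP; right;
    apply/existsP; exists r; rewrite inE eqxx.
  exists y; rewrite inE yr /=.
  have [_ h] := ps y yr; rewrite -D0; lia.
pose S1 := [set x | (x != r) && (P x != r)].
pose Tr1 := [set (P x, [set x; P (P x)]) | x in S1].
pose Tr2 := [set (r, [set c1; c]) | c in Ch :\ c1].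
exists (Tr1 :|: Tr2); split; last first.
  have h1 : #|Tr1| <= #|S1| by apply: leq_imset_card.
  have h2 : #|Tr2| <= #|Ch :\ c1| by apply: leq_imset_card.
  have h3 := cardsD1 c1 Ch; rewrite c1Ch in h3.
  have h4 : #|S1 :|: Ch| = #|V| - 1.
    have -> : S1 :|: Ch = [set~ r].
      apply/setP => x; rewrite !inE; case: (x =P r) => //= _; by case: (P x == r).
    by rewrite cardsC1; lia.
  have h5 : S1 :&: Ch = set0.
    by apply/setP => x; rewrite !inE; case: (P x == r); rewrite ?andbF.
  have := cardsU S1 Ch; rewrite h5 cards0 h4 subn0 => h6.
  have h7 := cardsU Tr1 Tr2.
  move: h1 h2 h3 h6 h7; move: #|Tr1| #|Tr2| #|S1| #|Ch| #|Ch :\ c1| #|Tr1 :|: Tr2| #|Tr1 :&: Tr2| (#|V|).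
  clear; lia.
have Tr1P : forall x, x \in S1 -> (P x, [set x; P (P x)]) \in Tr1 :|: Tr2.
  by move=> x xS; rewrite inE; apply/orP; left; apply/imsetP; exists x.
have Tr2P : forall c, c \in Ch -> c != c1 -> (r, [set c1; c]) \in Tr1 :|: Tr2.
  by move=> c cC cc1; rewrite inE; apply/orP; right; apply/imsetP; exists c => //; rewrite in_setD1 cc1 cC.
have ChP : forall c, c \in Ch -> e r c.
  by move=> c; rewrite inE => /andP [cr /eqP <-]; have [] := ps c cr.
have S1P : forall x, x != r -> P x != r -> x \in S1 by move=> x h1 h2; rewrite inE h1 h2.
have ChP2 : forall x, x != r -> P x == r -> x \in Ch by move=> x h1 h2; rewrite inE h1 h2.
split.
  move=> t; rewrite inE => /orP [] /imsetP [x + ->].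
    rewrite inE => /andP [xr pxr]; have [ex dx] := ps x xr; have [epx dpx] := ps _ pxr.
    split => /=.
      rewrite cards2; case: eqVneq => // h; rewrite -h in dpx; lia.
    by move=> w; rewrite !inE => /orP [] /eqP ->; rewrite // es.
  rewrite !inE => /andP [xc1 xCh]; split => /=.
    by rewrite cards2 eq_sym xc1.
  by move=> w; rewrite !inE => /orP [] /eqP ->; apply: ChP; rewrite // inE.
pose ds := dstep e (Tr1 :|: Tr2).
have stp : forall x y z, e y z -> (x == z) || (trans_of x y z \in Tr1 :|: Tr2) ->
    connect ds (x, y) (y, z).
  by move=> x y z eyz h; apply: connect1; rewrite /ds /dstep /= eqxx eyz.
have up : forall n x, D x < n -> x != r ->
    exists2 c, c \in Ch & connect ds (x, P x) (c, r).
  elim=> // n IH x Dx xr.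
  case: (eqVneq (P x) r) => [pxr|pxr].
    by exists x; [apply: ChP2; rewrite ?pxr | rewrite pxr connect0].
  have [ex dx] := ps x xr; have [epx dpx] := ps _ pxr.
  have [c cC cc] := IH (P x) ltac:(lia) pxr.
  exists c => //; apply: connect_trans cc; apply: stp; first by rewrite es.
  by rewrite Tr1P ?orbT // S1P.
have down : forall n x, D x < n -> x != r ->
    exists2 c, c \in Ch & connect ds (r, c) (P x, x).
  elim=> // n IH x Dx xr.
  case: (eqVneq (P x) r) => [pxr|pxr].
    by exists x; [apply: ChP2; rewrite ?pxr | rewrite pxr connect0].
  have [ex dx] := ps x xr; have [epx dpx] := ps _ pxr.
  have [c cC cc] := IH (P x) ltac:(lia) pxr.
  exists c => //; apply: connect_trans cc _; apply: stp => //.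
  have -> : trans_of (P (P x)) (P x) x = (P x, [set x; P (P x)]).
    by rewrite /trans_of; congr pair; apply/setP => w; rewrite !inE orbC.
  by rewrite Tr1P ?orbT // S1P.
have root : forall c c', c \in Ch -> c' \in Ch -> connect ds (c, r) (r, c').
  move=> c c' cC c'C.
  have s1 : connect ds (c, r) (r, c1).
    apply: stp; first exact: ChP.
    case: (eqVneq c c1) => [->|cc1]; first by apply/orP; left.
    have -> : trans_of c r c1 = (r, [set c1; c]).
      by rewrite /trans_of; congr pair; apply/setP => w; rewrite !inE orbC.
    by rewrite Tr2P ?orbT.
  have s2 : connect ds (r, c1) (c1, r).
    by apply: stp; [rewrite es; exact: ChP | apply/orP; left].
  have s3 : connect ds (c1, r) (r, c').
    apply: stp; first exact: ChP.
    case: (eqVneq c1 c') => [->|cc1]; first by apply/orP; left.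
    by rewrite /trans_of Tr2P ?orbT // eq_sym.
  exact: connect_trans (connect_trans s1 s2) s3.
move=> x y.
case: (eqVneq x y) => [<-|xy].
  by exists [::]; split => // i.
case: (eqVneq x r) => [xr|xr].
  have yr : y != r by rewrite -xr eq_sym.
  have [c cC cc] := down (D y).+1 y (ltnSn _) yr.
  have [s hs] := dart_walk (ChP _ cC) cc.
  by exists s; rewrite xr.
have [c cC cc] := up (D x).+1 x (ltnSn _) xr.
have exp : e x (P x) by rewrite es; have [] := ps x xr.
case: (eqVneq y r) => [->|yr].
  by apply: (dart_walk exp cc).
have [c' c'C cc'] := down (D y).+1 y (ltnSn _) yr.
exact: (dart_walk exp (connect_trans (connect_trans cc (root _ _ cC c'C)) cc')).
Qed.

Unset Implicit Arguments.

Theorem lemma5 (V : finType) (e : rel V)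
  (e_sym : symmetric e) (e_irr : irreflexive e)
  (Gconn : connected_graph e) (p : V) (Hcut : cut_vertex e p) :
  ((exists Tr : {set transition V},
      connecting_transition_set e Tr /\ #|Tr| = #|V| - 2) /\
   (forall Tr : {set transition V},
      connecting_transition_set e Tr -> #|V| - 2 <= #|Tr|)) /\
  (connecting_hypergraph e [set [set: V]] /\
   forall H : {set {set V}}, connecting_hypergraph e H ->
      hcost [set [set: V]] <= hcost H).
Proof.
have [u [v [up vp nuv]]] := Hcut.
have low := trans_lower e_sym e_irr up vp nuv.
have [Hc Hcost] := top_hyp Gconn up.
split; split => //.
- have [Tr [cT le]] := construct e_sym e_irr Gconn up.
  by exists Tr; split => //; apply/eqP; rewrite eqn_leq le low.
- by move=> H HH; rewrite Hcost; apply: hyp_bound up vp nuv H HH.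
Qed.
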